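(* For every state $p$, the state $p$ itself is a vertex (extreme point) of the convex polytope $p^{TP}=\{Tp : T\in TP(d)\}$.
   Context: Fix $d\ge 2$, $\beta\in(0,\infty)$ and pairwise distinct reals $E_0=0,E_1,\dots,E_{d-1}$. Put $q_{m,n}=e^{-\beta(E_m-E_n)}$, $Z=\sum_j q_{j,0}$, $g_i=q_{i,0}/Z$. A state is a probability vector in $\mathbb{R}^d$. $TP(d)$ is the set of $d\times d$ real matrices with non-negative entries, columns summing to $1$, and $Tg=g$. *)

(* Defs.v *)
From HB Require Import structures.
From mathcomp Require Import all_boot all_order all_algebra.
From mathcomp Require Import all_classical all_reals all_analysis.
Set Implicit Arguments. Unset Strict Implicit. Unset Printing Implicit Defensive.
Import Order.TTheory GRing.Theory Num.Theory.
Local Open Scope ring_scope.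

Definition qf {R : realType} {d : nat} (beta : R) (E : 'I_d -> R) (m n : 'I_d) : R :=
  expR (- (beta * (E m - E n))).

Definition Zpart {R : realType} {d : nat} (beta : R) (E : 'I_d -> R) (i0 : 'I_d) : R :=
  \sum_(j < d) qf beta E j i0.

Definition gibbs {R : realType} {d : nat} (beta : R) (E : 'I_d -> R) (i0 : 'I_d) : 'cV[R]_d :=
  \col_(i < d) (qf beta E i i0 / Zpart beta E i0).

Definition is_state {R : realType} {d : nat} (p : 'cV[R]_d) : Prop :=
  (forall i, 0 <= p i 0) /\ \sum_(i < d) p i 0 = 1.

Definition in_TP {R : realType} {d : nat} (beta : R) (E : 'I_d -> R) (i0 : 'I_d)
  (T : 'M[R]_d) : Prop :=
  (forall i j, 0 <= T i j) /\ (forall j, \sum_(i < d) T i j = 1) /\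
  T *m gibbs beta E i0 = gibbs beta E i0.

Definition TP_orbit {R : realType} {d : nat} (beta : R) (E : 'I_d -> R) (i0 : 'I_d)
  (p : 'cV[R]_d) : 'cV[R]_d -> Prop :=
  fun x => exists T, in_TP beta E i0 T /\ x = T *m p.

Definition is_extreme_point {R : realType} {d : nat} (S : 'cV[R]_d -> Prop) (x : 'cV[R]_d) : Prop :=
  S x /\ forall (y z : 'cV[R]_d) (t : R), S y -> S z -> 0 < t -> t < 1 ->
    x = t *: y + (1 - t) *: z -> y = x /\ z = x.

(* Main.v *)
Require Import Defs.
From HB Require Import structures.
From mathcomp Require Import all_boot all_order all_algebra.
From mathcomp Require Import all_classical all_reals all_analysis.
From mathcomp Require Import ring lra.
Import Order.TTheory GRing.Theory Num.Theory.
Local Open Scope ring_scope.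

Section Aux.
Variables (R : realType) (d : nat) (g : 'cV[R]_d).
Hypothesis hg : forall i, 0 < g i 0.

Definition Ff (x : 'cV[R]_d) : R := \sum_i (x i 0) ^+ 2 / g i 0.

Lemma cs_row (w : 'I_d -> R) (p : 'cV[R]_d) (c : R) :
  (forall j, 0 <= w j) -> \sum_j w j * g j 0 = c -> 0 < c ->
  (\sum_j w j * p j 0) ^+ 2 / c <= \sum_j w j * (p j 0 ^+ 2 / g j 0).
Proof.
move=> hw hc c0.
set B := \sum_j w j * p j 0.
set A := \sum_j w j * (p j 0 ^+ 2 / g j 0).
set l := B / c.
have H0 : 0 <= \sum_j w j * ((p j 0 - l * g j 0) ^+ 2 / g j 0).
  apply: sumr_ge0 => j _; apply: mulr_ge0 => //.
  by apply: divr_ge0; [exact: sqr_ge0 | exact: ltW].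
have E1 : \sum_j w j * ((p j 0 - l * g j 0) ^+ 2 / g j 0) =
  \sum_j (w j * (p j 0 ^+ 2 / g j 0) - (2 * l) * (w j * p j 0) + (l ^+ 2) * (w j * g j 0)).
  apply: eq_bigr => j _.
  have gj := hg j; have gj0 : g j 0 != 0 by rewrite gt_eqF.
  by field.
rewrite E1 big_split /= sumrB -!mulr_sumr hc -/A -/B in H0.
have -> : B ^+ 2 / c = A - (A - 2 * l * B + l ^+ 2 * c).
  rewrite /l; have c0' : c != 0 by rewrite gt_eqF. by field.
lra.
Qed.

Lemma F_mono (T : 'M[R]_d) (p : 'cV[R]_d) :
  (forall i j, 0 <= T i j) -> (forall j, \sum_i T i j = 1) -> T *m g = g ->
  Ff (T *m p) <= Ff p.
Proof.
move=> hT hcol hTg.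
rewrite /Ff.
apply: (@le_trans _ _ (\sum_i \sum_j T i j * (p j 0 ^+ 2 / g j 0))).
  apply: ler_sum => i _; rewrite mxE.
  apply: (@cs_row (fun j => T i j) p (g i 0) (hT i) _ (hg i)).
  by have := congr1 (fun M : 'M[R]_(d,1) => M i 0) hTg; rewrite mxE.
rewrite exchange_big /= le_eqVlt; apply/orP; left; apply/eqP/eq_bigr => j _.
by rewrite -mulr_suml hcol mul1r.
Qed.

Lemma F_ge0 x : 0 <= Ff x.
Proof. apply: sumr_ge0 => i _; apply: divr_ge0; [exact: sqr_ge0|exact: ltW]. Qed.

End Aux.

Theorem mainTheorem3 (R : realType) (d : nat) (hd : (2 <= d)%N)
  (beta : R) (hbeta : 0 < beta) (E : 'I_d -> R) (i0 : 'I_d)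
  (hi0 : nat_of_ord i0 = 0%N) (hE0 : E i0 = 0) (hEinj : injective E)
  (p : 'cV[R]_d) (hp : is_state p) :
  is_extreme_point (TP_orbit beta E i0 p) p.
Proof.
set g := gibbs beta E i0.
have hg : forall i, 0 < g i 0.
  move=> i; rewrite /g /gibbs mxE; apply: divr_gt0; first exact: expR_gt0.
  rewrite /Zpart (bigD1 i0) //=; apply: ltr_pwDl; first exact: expR_gt0.
  by apply: sumr_ge0 => j _; apply: ltW; exact: expR_gt0.
split.
  exists 1%:M; split; last by rewrite mul1mx.
  split; first by move=> i j; rewrite mxE; case: (i == j).
  split; last by rewrite mul1mx.
  move=> j; rewrite (bigD1 j) //= big1 ?addr0; first by rewrite mxE eqxx.
  by move=> i /negbTE hij; rewrite mxE hij.
move=> y0 z0 t [T [[hT1 [hT2 hT3]] ->]] [S [[hS1 [hS2 hS3]] ->]] t0 t1 hpt.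
have Fy := @F_mono R d g hg T p hT1 hT2 hT3.
have Fz := @F_mono R d g hg S p hS1 hS2 hS3.
set y := T *m p in Fy hpt *; set z := S *m p in Fz hpt *.
clearbody y z.
have key : \sum_i (t * ((y i 0) ^+ 2 / g i 0) + (1 - t) * ((z i 0) ^+ 2 / g i 0)
                   - (p i 0) ^+ 2 / g i 0)
         = \sum_i (t * (1 - t)) * ((y i 0 - z i 0) ^+ 2 / g i 0).
  apply: eq_bigr => i _.
  have pi : p i 0 = t * y i 0 + (1 - t) * z i 0.
    by rewrite hpt !mxE.
  have gi := hg i; have gi0 : g i 0 != 0 by rewrite gt_eqF.
  rewrite pi; by field.
rewrite big_split /= sumrN big_split /= -!mulr_sumr in key.
rewrite -/(Ff R d g y) -/(Ff R d g z) -/(Ff R d g p) in key.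
have hsum : \sum_i (y i 0 - z i 0) ^+ 2 / g i 0 = 0.
  apply/eqP; rewrite eq_le; apply/andP; split; last first.
    apply: sumr_ge0 => i _; apply: divr_ge0; [exact: sqr_ge0|exact: ltW].
  have tt : 0 < t * (1 - t) by apply: mulr_gt0; lra.
  rewrite -(pmulr_rle0 _ tt) -key.
  have : t * Ff R d g y <= t * Ff R d g p by rewrite ler_pM2l.
  have : (1 - t) * Ff R d g z <= (1 - t) * Ff R d g p by rewrite ler_pM2l // subr_gt0.
  lra.
have yz : forall i, y i 0 = z i 0.
  move=> i.
  have /psumr_eq0P H := hsum.
  have /eqP := H (fun j _ => divr_ge0 (sqr_ge0 _) (ltW (hg j))) i isT.
  have gi := hg i.
  by rewrite mulf_eq0 invr_eq0 (gt_eqF gi) orbF sqrf_eq0 subr_eq0 => /eqP.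
have yp : y = p.
  apply/matrixP => i j; rewrite (ord1 j) hpt !mxE -yz; ring.
split => //; apply/matrixP => i j; rewrite (ord1 j) -yp yz //.
Qed.
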